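(* Let $f$ be as in the following setting: $f(x)=\prod_{j=1}^N(a_jx+b_j)^{d_j}$ with $N\ge1$, $a_j,b_j,d_j$ positive integers, and let $M_n:=\max_{1\le j\le N}\sqrt{a_jn+b_j}$. Then, as $n\to\infty$, $$\sum_{p\le M_n} v_p\big(\operatorname{lcm}(f(1),\dots,f(n))\big)\log p=O(\sqrt n),$$ where the sum runs over primes $p\le M_n$.
   Context: $v_p(a)$ denotes the exponent of the prime $p$ in the positive integer $a$. *)

(* Defs.v *)
From Stdlib Require Import Reals.
From mathcomp Require Import all_boot.

Set Implicit Arguments.
Unset Strict Implicit.
Unset Printing Implicit Defensive.

(* f(x) = prod_{j=1}^N (a_j x + b_j)^{d_j}; indices j range over 0..N-1. *)
Definition fpoly (N : nat) (a b d : nat -> nat) (x : nat) : nat :=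
  (\prod_(0 <= j < N) (a j * x + b j) ^ (d j))%N.

Definition Lf (N : nat) (a b d : nat -> nat) (n : nat) : nat :=
  (\big[lcmn/1]_(1 <= x < n.+1) fpoly N a b d x)%N.

Definition Mn (N : nat) (a b : nat -> nat) (n : nat) : R :=
  foldr Rmax R0
    (map (fun j => sqrt (INR (a j * n + b j)%N)) (iota 0 N)).

(* sum_{p prime, p <= M_n} v_p(L_n) log p.  Every p <= M_n lies in
   0 .. Z.to_nat (up M_n) - 1, so the finite range below covers all of them. *)
Definition Ssum (N : nat) (a b d : nat -> nat) (n : nat) : R :=
  foldr Rplus R0
    (map (fun p =>
            if prime p then
              if Rle_dec (INR p) (Mn N a b n)
              then Rmult (INR (logn p (Lf N a b d n))) (ln (INR p))
              else R0
            else R0)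
         (iota 0 (Z.to_nat (up (Mn N a b n))))).

(* Main.v *)
Require Import Defs.
From Stdlib Require Import Reals.
From mathcomp Require Import all_boot zify.

Definition pf (p : nat) : nat := if prime p then p else 1%N.

Lemma pf_gt0 p : (0 < pf p)%N.
Proof. rewrite /pf; case: ifP => // /prime_gt0 //. Qed.

Lemma ndvd_pprod q lo k : prime q -> (k <= q)%N ->
  ~~ (q %| \prod_(lo <= p < k) pf p)%N.
Proof.
move=> pq; elim: k => [|k IH] hk.
  by rewrite big_geq // Euclid_dvd1.
case: (leqP lo k) => hlo; last by rewrite big_geq // Euclid_dvd1.
rewrite big_nat_recr //= Euclid_dvdM // negb_or IH ?(ltnW hk) //=.
rewrite /pf; case: ifP => pk; last by rewrite Euclid_dvd1.
apply/negP => /dvdn_leq; rewrite prime_gt0 // => /(_ isT); lia.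
Qed.

Lemma pprod_dvd lo hi X : (forall p, (lo <= p < hi)%N -> prime p -> p %| X)%N ->
  (\prod_(lo <= p < hi) pf p %| X)%N.
Proof.
elim: hi => [|k IH] H; first by rewrite big_geq.
case: (leqP lo k) => hlo; last by rewrite big_geq.
rewrite big_nat_recr //=.
have H1 : (\prod_(lo <= p < k) pf p %| X)%N.
  by apply: IH => p /andP[h1 h2] pp; apply: H => //; rewrite h1 /=; lia.
case pk: (prime k); last by rewrite /pf pk muln1.
have -> : pf k = k by rewrite /pf pk.
rewrite Gauss_dvd ?H1 ?H //=; last by rewrite coprime_sym prime_coprime // ndvd_pprod.
by rewrite hlo ltnSn.
Qed.

Lemma bin_le n k : ('C(n, k) <= 2 ^ n)%N.
Proof.
case: (leqP k n) => hk; last by rewrite bin_small.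
have := Pascal 1 1 n; rewrite addn1 => ->.
rewrite (bigD1 (inord k : 'I_n.+1)) //= inordK ?ltnS // !exp1n !muln1.
exact: leq_addr.
Qed.

Lemma ndvd_fact p n : prime p -> (n < p)%N -> ~~ (p %| n`!)%N.
Proof.
move=> pp; elim: n => [|n IH] hn; first by rewrite fact0 Euclid_dvd1.
rewrite factS Euclid_dvdM // negb_or IH ?(ltnW hn) // andbT.
by apply/negP => /dvdn_leq; lia.
Qed.

Lemma binom_dvd m :
  (\prod_(m.+2 <= p < (m.*2).+2) pf p %| 'C((m.*2).+1, m.+1))%N.
Proof.
apply: pprod_dvd => p /andP[h1 h2] pp.
have e := bin_fact (n := (m.*2).+1) (m := m.+1) ltac:(lia).
have : (p %| ((m.*2).+1)`!)%N.
  rewrite fact_prod; rewrite (Euclid_dvd_prod _ _ _ pp).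
  rewrite (big_cat_nat _ (n := p)) //=; last lia.
  rewrite (big_ltn (m := p)) //=; first by rewrite dvdnn orbT.
  lia.
rewrite -e Euclid_dvdM // Euclid_dvdM // (negbTE (ndvd_fact _ (m.+1) pp _)); last lia.
rewrite (negbTE (ndvd_fact _ (m.*2.+1 - m.+1) pp _)) ?orbF //; lia.
Qed.

Lemma primorial n : (\prod_(0 <= p < n.+1) pf p <= 8 ^ n)%N.
Proof.
elim/ltn_ind: n => n IH.
case: n IH => [|[|[|n]]] IH.
- by rewrite unlock.
- by rewrite unlock.
- by rewrite unlock.
have [m hm] : exists m, n.+3 = (m.*2).+1 \/ n.+3 = (m.*2).+2.
  exists (n.+2)./2; have := odd_double_half n.+2.
  case: (odd n.+2) => /= h; [right|left]; rewrite -muln2 in h *; lia.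
case: hm => hm.
- have m1 : (1 <= m)%N by lia.
  rewrite hm (big_cat_nat _ (n := m.+2)) //=; last lia.
  have H1 := IH m.+1 ltac:(lia).
  have H2 : (\prod_(m.+2 <= p < (m.*2).+2) pf p <= 'C((m.*2).+1, m.+1))%N.
    by apply: dvdn_leq (binom_dvd m); rewrite bin_gt0; lia.
  have H3 := bin_le ((m.*2).+1) m.+1.
  apply: leq_trans (leq_mul H1 (leq_trans H2 H3)) _.
  have -> : (8 ^ (m.*2).+1 = 8 ^ m.+1 * 8 ^ m)%N by rewrite -expnD; congr (_ ^ _); lia.
  rewrite leq_pmul2l ?expn_gt0 //.
  have -> : (8 ^ m = 2 ^ (3 * m))%N by rewrite expnM.
  rewrite leq_exp2l //; lia.
- have m2 : (1 <= m)%N by rewrite -muln2 in hm; lia.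
  rewrite hm big_nat_recr //=.
  have -> : pf (m.*2).+2 = 1%N.
    rewrite /pf; case: ifP => // pr.
    have : (2 %| (m.*2).+2)%N by rewrite -doubleS -muln2 dvdn_mull.
    rewrite dvdn_prime2 //; lia.
  rewrite muln1; apply: leq_trans (IH (m.*2).+1 ltac:(lia)) _.
  by rewrite leq_exp2l.
Qed.

Lemma leq_expr a b k : (a <= b)%N -> (a ^ k <= b ^ k)%N.
Proof. move=> h; elim: k => // k IH; rewrite !expnS leq_mul //. Qed.

Arguments leq_expr {a b} k.

Lemma prod_expn lo hi (F : nat -> nat) k :
  ((\prod_(lo <= p < hi) F p) ^ k = \prod_(lo <= p < hi) F p ^ k)%N.
Proof.
elim: k => [|k IH]; first by rewrite expn0 big1.
by rewrite expnS IH -big_split /=; apply: eq_bigr => i _; rewrite expnS.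
Qed.

Lemma sqrt_facts m : (Nat.sqrt m * Nat.sqrt m <= m < (Nat.sqrt m).+1 * (Nat.sqrt m).+1)%N.
Proof. have := Nat.sqrt_spec m (Nat.le_0_l m); lia. Qed.

Lemma sqrt_le p m : (p * p <= m)%N -> (p <= Nat.sqrt m)%N.
Proof. move=> h; apply/leP; apply Nat.sqrt_le_square; lia. Qed.

Lemma key (m K D : nat) (e : nat -> nat) :
  (K < m.+1 * m.+1)%N ->
  (forall p, prime p -> (p <= m)%N -> (p ^ e p <= K ^ D)%N) ->
  (\prod_(0 <= p < m.+1) (if prime p then p ^ e p else 1) <= 8 ^ (8 * D * m))%N.
Proof.
move=> hK he.
set s := Nat.sqrt m.
have hs := sqrt_facts m; rewrite -/s in hs.
set X := (m.+1 ^ (2 * D))%N.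
have X1 : (0 < X)%N by rewrite expn_gt0.
have KX : (K ^ D <= X)%N.
  rewrite /X expnM; apply: leq_expr _ _; rewrite expnS expn1; lia.
pose g p := if (p < s.+1)%N then X else 1%N.
have A : (\prod_(0 <= p < m.+1) (if prime p then p ^ e p else 1)
   <= \prod_(0 <= p < m.+1) (pf p ^ (4 * D) * g p))%N.
  rewrite big_nat_cond [X in (_ <= X)%N]big_nat_cond.
  apply: leq_prod => p /andP[/andP[_ hp] _].
  rewrite /pf /g; case: ifP => pp; last first.
    by rewrite exp1n mul1n; case: ifP.
  case: ifP => hps.
    apply: leq_trans (he p pp ltac:(lia)) _.
    by apply: leq_trans KX _; apply: leq_pmull; rewrite expn_gt0 prime_gt0.
  rewrite muln1; apply: leq_trans (he p pp ltac:(lia)) _.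
  have hpp : (m < p * p)%N.
    rewrite ltnNge; apply/negP => /sqrt_le; rewrite -/s; lia.
  have : (K <= (p * p) * (p * p))%N by apply: leq_trans (ltnW hK) _; apply: leq_mul.
  move=> /(leq_expr D) H; apply: leq_trans H _; rewrite expnM; apply: leq_expr.
  by rewrite !expnS expn0 muln1 !mulnA.
apply: leq_trans A _.
rewrite big_split /= -prod_expn.
have C1 : (\prod_(0 <= p < m.+1) g p = X ^ s.+1)%N.
  rewrite (big_cat_nat _ (n := s.+1)) //=; last nia.
  rewrite (eq_big_nat _ _ (F2 := fun _ => X)); last first.
    by move=> i /andP[_ hi]; rewrite /g hi.
  rewrite (eq_big_nat _ _ (F1 := g) (F2 := fun _ => 1%N)); last first.
    by move=> i /andP[hi _]; rewrite /g ltnNge hi.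
  by rewrite !prod_nat_const_nat exp1n muln1 subn0.
rewrite C1.
have P1 := leq_expr (4 * D) (primorial m).
have P2 : (X ^ s.+1 <= 8 ^ (4 * D * m))%N.
  have h1 : (m.+1 <= 8 ^ s)%N.
    have h2 : (s.+1 <= 2 ^ s)%N by apply: ltn_expl.
    have hm : (m.+1 <= s.+1 * s.+1)%N by case/andP: hs.
    apply: leq_trans hm _; apply: leq_trans (leq_mul h2 h2) _.
    by rewrite -expnMn; apply: leq_expr.
  rewrite /X -expnM.
  apply: leq_trans (leq_expr _ h1) _; rewrite -expnM leq_exp2l //.
  have hs1 : (s * s <= m)%N by case/andP: hs.
  have hs2 : (s <= m)%N by apply: leq_trans hs1; case: (s) => // s'; apply: leq_pmulr.
  have := leq_mul (leqnn D) hs1; have := leq_mul (leqnn D) hs2; nia.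
apply: leq_trans (leq_mul P1 P2) _.
by rewrite -expnM -expnD leq_exp2l //; lia.
Qed.

Lemma leq_sum_term lo hi (F : nat -> nat) j : (lo <= j < hi)%N ->
  (F j <= \sum_(lo <= i < hi) F i)%N.
Proof.
move=> /andP[h1 h2].
rewrite (big_cat_nat _ (n := j)) //= ?(ltnW h2) // (big_ltn (m := j)) //; lia.
Qed.

Lemma fpoly_gt0 N a b d x : (forall j, (j < N)%N -> (0 < b j)%N) ->
  (0 < fpoly N a b d x)%N.
Proof.
move=> hb; rewrite /fpoly big_nat_cond; apply: prodn_cond_gt0 => j /andP[/andP[_ hj] _].
rewrite expn_gt0; have := hb j hj; lia.
Qed.

Lemma fpoly_le N a b d n x : (x <= n)%N ->
  (fpoly N a b d x <= (\sum_(0 <= j < N) (a j * n + b j)) ^ (\sum_(0 <= j < N) d j))%N.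
Proof.
move=> hx; rewrite /fpoly expn_sum big_nat_cond [X in (_ <= X)%N]big_nat_cond.
apply: leq_prod => j /andP[hj _]; apply: leq_expr.
apply: leq_trans (leq_sum_term _ _ (fun j => a j * n + b j) _ hj).
rewrite leq_add2r; exact: leq_mul.
Qed.

Lemma vp_bound N a b d n p : (forall j, (j < N)%N -> (0 < b j)%N) -> prime p ->
  (p ^ logn p (Lf N a b d n) <=
   (\sum_(0 <= j < N) (a j * n + b j)) ^ (\sum_(0 <= j < N) d j))%N.
Proof.
move=> hb pp.
set K := (X in (_ <= X)%N).
suff : (0 < Lf N a b d n)%N /\ (p ^ logn p (Lf N a b d n) <= K)%N by case.
rewrite /Lf big_nat_cond.
apply: (big_ind (fun u => (0 < u)%N /\ (p ^ logn p u <= K)%N)).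
- rewrite logn1 expn0; split => //.
  have := fpoly_le N a b d n 0 (leq0n n); have := fpoly_gt0 N a b d 0 hb; rewrite -/K; lia.
- move=> u v [u0 hu] [v0 hv]; split; first by rewrite lcmn_gt0 u0.
  rewrite logn_lcm //; case: (leqP (logn p u) (logn p v)) => h.
    exact: hv.
  exact: hu.
- move=> x /andP[/andP[_ hx] _]; split; first exact: fpoly_gt0.
  apply: leq_trans (fpoly_le N a b d n x _); last lia.
  by apply: dvdn_leq (fpoly_gt0 _ _ _ _ _ hb) (pfactor_dvdnn _ _).
Qed.

Open Scope R_scope.

Lemma lnle (x y : R) : (0 < x) -> (x <= y) -> (ln x <= ln y).
Proof.
move=> hx hxy; case: (Rle_lt_or_eq_dec _ _ hxy) => h.
  by apply: Rlt_le; apply: ln_increasing.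
by rewrite h; apply: Rle_refl.
Qed.

Lemma INR_mul m n : INR (m * n)%N = (INR m * INR n).
Proof. by rewrite -mult_INR. Qed.

Lemma INR_exp m k : INR (m ^ k)%N = (INR m ^ k).
Proof. elim: k => [|k IH]; first by rewrite expn0. by rewrite expnS INR_mul IH. Qed.

Lemma INR_leq m n : (m <= n)%N -> (INR m <= INR n).
Proof. by move/leP; apply: le_INR. Qed.

Definition sumR (l : seq nat) (g : nat -> R) : R := foldr Rplus 0 (map g l).

Lemma sumR_cat l1 l2 g : sumR (l1 ++ l2) g = (sumR l1 g + sumR l2 g).
Proof. elim: l1 => [|x l IH] /=; rewrite /sumR /=; first by rewrite Rplus_0_l.
by rewrite -/(sumR _ _) IH -/(sumR _ _) Rplus_assoc. Qed.

Lemma sumR_ge0 l g : (forall x, 0 <= g x) -> (0 <= sumR l g).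
Proof. move=> h; elim: l => [|x l IH] /=; first exact: Rle_refl.
rewrite /sumR /= -/(sumR _ _); apply: Rplus_le_le_0_compat => //. Qed.

Lemma sumR_le l g h : (forall x, g x <= h x) -> (sumR l g <= sumR l h).
Proof. move=> H; elim: l => [|x l IH] /=; first exact: Rle_refl.
rewrite /sumR /= -!/(sumR _ _); apply: Rplus_le_compat => //. Qed.

Lemma sumR_eq l g h : (forall x, x \in l -> g x = h x) -> sumR l g = sumR l h.
Proof. elim: l => [|x l IH] H; first by [].
rewrite /sumR /= -!/(sumR _ _) H ?mem_head // IH //.
by move=> y hy; apply: H; rewrite in_cons hy orbT. Qed.

Lemma sumR_trunc U m h : (forall x, 0 <= h x) -> (forall x, (m < x)%N -> h x = 0) ->
  (sumR (iota 0 U) h <= sumR (iota 0 m.+1) h).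
Proof.
move=> h0 hz.
have E1 : sumR (iota 0 (U + m.+1)) h = (sumR (iota 0 U) h + sumR (iota U m.+1) h).
  by rewrite iotaD sumR_cat.
have E2 : sumR (iota 0 (m.+1 + U)) h = sumR (iota 0 m.+1) h.
  rewrite iotaD sumR_cat (sumR_eq (iota (0 + m.+1) U) h (fun _ => 0)); last first.
    move=> x; rewrite mem_iota => /andP[hx _]; apply: hz; lia.
  have -> : sumR (iota (0 + m.+1) U) (fun _ => 0) = 0.
    by elim: (iota _ _) => //= x l IH; rewrite /sumR /= -/(sumR _ _) IH Rplus_0_l.
  by rewrite Rplus_0_r.
rewrite -E2 addnC E1 -{1}(Rplus_0_r (sumR _ _)); apply: Rplus_le_compat_l.
exact: sumR_ge0.
Qed.

Lemma sumR_ln m (e : nat -> nat) :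
  sumR (iota 0 m) (fun p => if prime p then (INR (e p) * ln (INR p)) else 0)
  = ln (INR (\prod_(0 <= p < m) (if prime p then p ^ e p else 1))%N).
Proof.
elim: m => [|m IH]; first by rewrite big_geq //= ln_1.
have -> : iota 0 m.+1 = iota 0 m ++ [:: m] by rewrite -addn1 iotaD.
rewrite big_nat_recr //= sumR_cat IH.
have P1 : (0 < INR (\prod_(0 <= p < m) (if prime p then p ^ e p else 1))%N).
  apply: lt_0_INR; apply/ltP; apply: prodn_gt0 => i; case: ifP => // pi.
  by rewrite expn_gt0 prime_gt0.
rewrite /sumR /= Rplus_0_r INR_mul ln_mult //; last first.
  by apply: lt_0_INR; apply/ltP; case: ifP => // pm; rewrite expn_gt0 prime_gt0.
case: ifP => pm; last by rewrite ln_1.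
rewrite INR_exp ln_pow //; apply: lt_0_INR; apply/ltP; exact: prime_gt0.
Qed.

Lemma Mn_le N a b n K : (forall j, (j < N)%N -> (a j * n + b j <= K)%N) ->
  Mn N a b n <= sqrt (INR K).
Proof.
move=> H; rewrite /Mn.
have : forall j, j \in iota 0 N -> (a j * n + b j <= K)%N.
  by move=> j; rewrite mem_iota => /andP[_ hj]; apply: H.
elim: (iota 0 N) => [|x l IH] Hl /=; first exact: sqrt_pos.
apply: Rmax_lub.
  apply: sqrt_le_1_alt; apply: INR_leq; apply: Hl; exact: mem_head.
by apply: IH => j hj; apply: Hl; rewrite in_cons hj orbT.
Qed.

Lemma term_ge0 p k : prime p -> 0 <= INR k * ln (INR p).
Proof.
move=> pp; apply: Rmult_le_pos; first exact: pos_INR.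
rewrite -ln_1; apply: lnle; first exact: Rlt_0_1.
have : (1 <= p)%N by apply: prime_gt0.
by move/INR_leq.
Qed.

Lemma sqrt_nat_le m K : (m * m <= K)%N -> INR m <= sqrt (INR K).
Proof.
move=> h; rewrite -(sqrt_square (INR m)); last exact: pos_INR.
by apply: sqrt_le_1_alt; rewrite -INR_mul; apply: INR_leq.
Qed.

Lemma le_sqrt_nat p K : INR p <= sqrt (INR K) -> (p * p <= K)%N.
Proof.
move=> h.
have h2 : INR p * INR p <= INR K.
  rewrite -(sqrt_sqrt (INR K)); last exact: pos_INR.
  by apply: Rmult_le_compat => //; exact: pos_INR.
rewrite -INR_mul in h2; apply/leP; exact: INR_le.
Qed.

Theorem mainTheorem5 (N : nat) (a b d : nat -> nat)
  (hN : (1 <= N)%N)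
  (ha : forall j, (j < N)%N -> (0 < a j)%N)
  (hb : forall j, (j < N)%N -> (0 < b j)%N)
  (hd : forall j, (j < N)%N -> (0 < d j)%N) :
  exists C : R, exists n0 : nat, forall n : nat, (n0 <= n)%N ->
    Rle (Rabs (Ssum N a b d n)) (Rmult C (sqrt (INR n))).
Proof.
set D := (\sum_(0 <= j < N) d j)%N.
set S := (\sum_(0 <= j < N) (a j + b j))%N.
exists (INR 8 * INR D * ln (INR 8) * sqrt (INR S)), 1%N => n hn.
set K := (\sum_(0 <= j < N) (a j * n + b j))%N.
set m := Nat.sqrt K.
set e := fun p => logn p (Lf N a b d n).
have hK : (K < m.+1 * m.+1)%N by case/andP: (sqrt_facts K).
have hmK : (m * m <= K)%N by case/andP: (sqrt_facts K).
have hMn : Mn N a b n <= sqrt (INR K).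
  apply: Mn_le => j hj.
  exact: (leq_sum_term 0 N (fun j => a j * n + b j)%N j).
have hkey := key m K D e hK (fun p pp _ => vp_bound N a b d n p hb pp).
pose g p := if prime p then if Rle_dec (INR p) (Mn N a b n)
            then INR (e p) * ln (INR p) else 0 else 0.
pose h p := if prime p then (if (p <= m)%N then INR (e p) * ln (INR p) else 0) else 0.
pose h' p := if prime p then INR (e p) * ln (INR p) else 0.
have h0 : forall p, 0 <= h p.
  move=> p; rewrite /h; case: ifP => pp; last exact: Rle_refl.
  case: ifP => _; [exact: term_ge0 | exact: Rle_refl].
have g0 : forall p, 0 <= g p.
  move=> p; rewrite /g; case: ifP => pp; last exact: Rle_refl.
  destruct (Rle_dec (INR p) (Mn N a b n)); [exact: term_ge0 | exact: Rle_refl].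
have gh : forall p, g p <= h p.
  move=> p; rewrite /g /h; case: ifP => pp; last exact: Rle_refl.
  destruct (Rle_dec (INR p) (Mn N a b n)) as [hp|hp]; last by case: ifP => _; [exact: term_ge0 | exact: Rle_refl].
  have hpm : (p <= m)%N.
    apply: sqrt_le; apply: le_sqrt_nat; exact: Rle_trans hp hMn.
  by rewrite hpm; apply: Rle_refl.
have E : Ssum N a b d n = sumR (iota 0 (Z.to_nat (up (Mn N a b n)))) g by [].
rewrite E Rabs_right; last by apply: Rle_ge; apply: sumR_ge0.
apply: Rle_trans (sumR_le _ _ _ gh) _.
apply: Rle_trans (sumR_trunc _ m _ h0 _) _.
  by move=> x hx; rewrite /h; case: ifP => // _; rewrite leqNgt hx.
rewrite (sumR_eq _ h h'); last first.
  by move=> x; rewrite mem_iota /h /h' => /andP[_ hx]; case: ifP => // _; rewrite -ltnS hx.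
rewrite /h' sumR_ln.
apply: Rle_trans (lnle _ _ _ (INR_leq _ _ hkey)) _.
  apply: lt_0_INR; apply/ltP; apply: prodn_gt0 => i; case: ifP => // pi.
  by rewrite expn_gt0 prime_gt0.
rewrite INR_exp ln_pow; last by apply: lt_0_INR; apply/ltP.
rewrite !INR_mul.
have hm : INR m <= sqrt (INR S) * sqrt (INR n).
  apply: Rle_trans (sqrt_nat_le _ _ hmK) _.
  rewrite -sqrt_mult_alt; last exact: pos_INR.
  apply: sqrt_le_1_alt; rewrite -INR_mul; apply: INR_leq.
  rewrite /K /S big_distrl /=; apply: leq_sum => j _; nia.
have c0 : 0 <= INR 8 * INR D * ln (INR 8).
  apply: Rmult_le_pos; last by rewrite -ln_1; apply: lnle; [exact: Rlt_0_1 | exact: (INR_leq 1 8 isT)].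
  apply: Rmult_le_pos; exact: pos_INR.
have := Rmult_le_compat_l _ _ _ c0 hm.
have -> : INR 8 * INR D * ln (INR 8) * sqrt (INR S) * sqrt (INR n) =
  INR 8 * INR D * ln (INR 8) * (sqrt (INR S) * sqrt (INR n)) by ring.
have -> : INR 8 * INR D * INR m * ln (INR 8) = INR 8 * INR D * ln (INR 8) * INR m by ring.
done.
Qed.
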